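(* For every $n$, the parking order $\le_P$ on parking functions of degree $n$ admits least upper bounds: for parking functions $f=(\sigma,s)$ and $g=(\tau,t)$ of degree $n$, the pair $(\sigma\vee\tau,\ s\vee t)$ is a parking function and it is the least upper bound $f\vee g$ in $\le_P$ (joins taken in the weak order and in the Tamari order respectively).
   Context: $\mathrm{PBT}_n$ is the set of planar binary trees (each internal node has exactly two children, left and right) with $n+1$ leaves, leaves numbered left to right; $\mathrm{Des}(t)=\{1\le i\le n-1:\text{the }(i+1)\text{-st leaf of }t\text{ is a right child}\}$. For $\sigma\in S_n$ (one-line notation), $\mathrm{Des}(\sigma)=\{i:\sigma(i)>\sigma(i+1)\}$ and $\mathrm{Inv}(\sigma)=\{(i,j):i<j,\sigma(i)>\sigma(j)\}$. A parking function of degree $n$ is a pair $(\sigma,t)\in S_n\times\mathrm{PBT}_n$ with $\mathrm{Des}(t)\subseteq\mathrm{Des}(\sigma)$. The (left) weak order: $\sigma\le_w\tau$ iff $\mathrm{Inv}(\sigma)\subseteq\mathrm{Inv}(\tau)$. The Tamari order $\le_T$ on $\mathrm{PBT}_n$ is the reflexive–transitive closure of $s\le t$ whenever $t$ is obtained from $s$ by replacing a subtree of the form $x(A,y(B,C))$ by $x(y(A,B),C)$ (left rotation). Both are lattices. The parking order: $(\sigma,s)\le_P(\tau,t)$ iff $\sigma\le_w\tau$ and $s\le_T t$. *)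

(* Defs.v *)
From Stdlib Require Import Relation_Operators.
From mathcomp Require Import all_boot all_order all_fingroup.
Set Implicit Arguments. Unset Strict Implicit. Unset Printing Implicit Defensive.

(* Permutations of {1..n} are 'S_n (positions and values 0-indexed). *)

(* Des(sigma) as a set of 1-indexed positions i in 1..n-1 with sigma(i) > sigma(i+1). *)
Definition des_perm (n : nat) (s : 'S_n) : pred nat :=
  fun i => [&& 0 < i, i < n &
     (nth 0 [seq val (s k) | k <- enum 'I_n] i.-1 >
      nth 0 [seq val (s k) | k <- enum 'I_n] i)].

Definition inv_perm (n : nat) (s : 'S_n) (i j : 'I_n) : bool :=
  (i < j) && (s j < s i).

Definition weak_le (n : nat) (s t : 'S_n) : Prop :=
  forall i j : 'I_n, inv_perm s i j -> inv_perm t i j.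

Inductive tree : Type := Leaf | Node of tree & tree.

Fixpoint leaves (t : tree) : nat :=
  match t with Leaf => 1 | Node l r => leaves l + leaves r end.

Definition pbt (n : nat) (t : tree) : Prop := leaves t = n.+1.

(* For each leaf, left to right: is it a right child? (root leaf: false) *)
Fixpoint leaf_dirs_aux (b : bool) (t : tree) : seq bool :=
  match t with
  | Leaf => [:: b]
  | Node l r => leaf_dirs_aux false l ++ leaf_dirs_aux true r
  end.
Definition leaf_dirs (t : tree) : seq bool := leaf_dirs_aux false t.

(* Des(t) = { 1 <= i <= n-1 : the (i+1)-st leaf is a right child } *)
Definition des_tree (n : nat) (t : tree) : pred nat :=
  fun i => [&& 0 < i, i < n & nth false (leaf_dirs t) i].

Inductive rot_step : tree -> tree -> Prop :=
  | rot_root A B C : rot_step (Node A (Node B C)) (Node (Node A B) C)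
  | rot_left l l' r : rot_step l l' -> rot_step (Node l r) (Node l' r)
  | rot_right l r r' : rot_step r r' -> rot_step (Node l r) (Node l r').

Definition tamari_le : tree -> tree -> Prop := clos_refl_trans tree rot_step.

Definition parking (n : nat) (s : 'S_n) (t : tree) : Prop :=
  pbt n t /\ (forall i, des_tree n t i -> des_perm s i).

Definition parking_le (n : nat) (f g : 'S_n * tree) : Prop :=
  weak_le f.1 g.1 /\ tamari_le f.2 g.2.

Definition is_weak_join (n : nat) (s t j : 'S_n) : Prop :=
  [/\ weak_le s j, weak_le t j & forall u : 'S_n, weak_le s u -> weak_le t u -> weak_le j u].

Definition is_tamari_join (n : nat) (s t j : tree) : Prop :=
  [/\ pbt n j, tamari_le s j, tamari_le t j &
      forall u, pbt n u -> tamari_le s u -> tamari_le t u -> tamari_le j u].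

(* Main.v *)
Require Import Defs.
From mathcomp Require Import all_boot all_order all_fingroup.
From mathcomp Require Import zify.
From Stdlib Require Import Relation_Operators.

Set Implicit Arguments. Unset Strict Implicit. Unset Printing Implicit Defensive.

Notation dirs := leaf_dirs_aux.

Lemma leaves_pos t : 0 < leaves t.
Proof. elim: t => //= l IHl r IHr; lia. Qed.

Lemma size_dirs b t : size (dirs b t) = leaves t.
Proof. elim: t b => //= l IHl r IHr b; by rewrite size_cat IHl IHr. Qed.

Definition fitsAt (P : nat -> bool) o (ds : seq bool) :=
  forall i, nth false ds i -> P (o + i).

Lemma fitsAt_cat P o a b :
  fitsAt P o (a ++ b) <-> fitsAt P o a /\ fitsAt P (o + size a) b.
Proof.
split.
- move=> H; split=> i Hi.
  + apply: H; case: (ltnP i (size a)) => h.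
    * by rewrite nth_cat h.
    * by rewrite nth_default in Hi.
  + have := H (size a + i); rewrite nth_cat ltnNge leq_addr /= addKn addnA.
    by apply.
- move=> [Ha Hb] i; rewrite nth_cat; case: ltnP => h Hi.
  + exact: Ha.
  + by have := Hb _ Hi; rewrite -addnA subnKC.
Qed.

Lemma rot_leaves t t' : rot_step t t' -> leaves t = leaves t'.
Proof. elim=> /= *; lia. Qed.

Lemma rt_leaves t t' : tamari_le t t' -> leaves t = leaves t'.
Proof.
elim.
- by move=> ? ? /rot_leaves.
- by [].
- move=> ? ? ? _ -> _ ->. done.
Qed.

Definition dle (x y : seq bool) := forall i, nth false x i -> nth false y i.

Lemma dle_cat a a' b b' : size a = size a' -> dle a a' -> dle b b' ->
  dle (a ++ b) (a' ++ b').
Proof.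
move=> hs ha hb i; rewrite !nth_cat -hs; case: ltnP => _; [exact: ha | exact: hb].
Qed.

Lemma dle_refl x : dle x x. Proof. by []. Qed.

Lemma dle_trans x y z : dle x y -> dle y z -> dle x z.
Proof. move=> h1 h2 i /h1; exact: h2. Qed.

Lemma dirs_ft B : dle (dirs false B) (dirs true B).
Proof. case: B => [|l r] //= [|i] //. Qed.

Lemma rot_dle t t' : rot_step t t' -> forall b, dle (dirs b t) (dirs b t').
Proof.
elim=> [A B C|l l' r h IH|l r r' h IH] b /=.
- rewrite -catA; apply: dle_cat; [done|exact: dle_refl|].
  apply: dle_cat; [by rewrite !size_dirs|exact: dirs_ft|exact: dle_refl].
- apply: dle_cat; [by rewrite !size_dirs (rot_leaves h)|exact: IH|exact: dle_refl].
- apply: dle_cat; [done|exact: dle_refl|exact: IH].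
Qed.

Lemma rt_dle t t' : tamari_le t t' -> dle (dirs false t) (dirs false t').
Proof.
elim.
- by move=> ? ? /rot_dle; apply.
- move=> ?; exact: dle_refl.
- move=> ? ? ? _ h1 _ h2; exact: dle_trans h1 h2.
Qed.

Fixpoint mu t := match t with Leaf => 0 | Node l r => mu l + mu r + leaves l end.

Lemma rot_mu t t' : rot_step t t' -> mu t < mu t'.
Proof.
elim=> [A B C|l l' r h IH|l r r' h IH] /=.
- have := leaves_pos A; lia.
- rewrite (rot_leaves h); lia.
- lia.
Qed.

Lemma mu_bound t : mu t <= leaves t * leaves t.
Proof.
elim: t => //= l IHl r IHr.
have := leaves_pos l; have := leaves_pos r; nia.
Qed.

Section Fix.
Variable P : nat -> bool.

Definition hc o R := match R with Node B C => (if B is Leaf then true else false) && ~~ P o | Leaf => true end.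

Fixpoint ltb o t : bool :=
  match t with
  | Leaf => true
  | Node A R => [&& ltb o A, ltb (o + leaves A) R & hc (o + leaves A) R]
  end.

Lemma step t o b : fitsAt P o (dirs b t) -> ltb o t = false ->
  exists t', rot_step t t' /\ fitsAt P o (dirs b t').
Proof.
elim: t o b => [//|A IHA R IHR] o b /=.
move/fitsAt_cat; rewrite size_dirs => -[fA fR].
case hA: (ltb o A) => /=; last first.
  move=> _; have [A' [hs hf]] := IHA _ _ fA hA.
  exists (Node A' R); split; first exact: rot_left.
  by apply/fitsAt_cat; rewrite size_dirs -(rot_leaves hs).
case hR: (ltb (o + leaves A) R) => /=; last first.
  move=> _; have [R' [hs hf]] := IHR _ _ fR hR.
  exists (Node A R'); split; first exact: rot_right.
  by apply/fitsAt_cat; rewrite size_dirs.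
case: R IHR fR hR => [//|B C] _ /= /fitsAt_cat [fB fC] _ hh.
exists (Node (Node A B) C); split; first exact: rot_root.
rewrite /= -catA; apply/fitsAt_cat; split => //.
apply/fitsAt_cat; split; last by rewrite !size_dirs in fC *.
rewrite size_dirs.
case: B hh fB fC => [|B1 B2] hh fB _; last exact: fB.
move=> [|k] /=; [move=> _; rewrite addn0; move: hh => /=; by case: (P _) | by rewrite nth_nil].
Qed.

Lemma reach k t : leaves t * leaves t - mu t < k -> fitsAt P 0 (dirs false t) ->
  exists U, [/\ tamari_le t U, fitsAt P 0 (dirs false U) & ltb 0 U].
Proof.
elim: k t => [//|k IH] t hk hf.
case h: (ltb 0 t).
  by exists t; split => //; apply: rt_refl.
have [t' [hs hf']] := step hf h.
have [U [h1 h2 h3]] : exists U, [/\ tamari_le t' U, fitsAt P 0 (dirs false U) & ltb 0 U].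
  apply: IH hf'.
  have := rot_mu hs; have := mu_bound t'; rewrite -(rot_leaves hs); lia.
exists U; split => //; apply: rt_trans h1; exact: rt_step.
Qed.

Lemma combU R1 R2 o : ltb o R1 && hc o R1 -> ltb o R2 && hc o R2 ->
  leaves R1 = leaves R2 -> R1 = R2.
Proof.
elim: R1 R2 o => [|B1 _ C1 IH] [|B2 C2] o //=.
- have := leaves_pos B2; have := leaves_pos C2; lia.
- have := leaves_pos B1; have := leaves_pos C1; lia.
case: B1 => [|? ?]; case: B2 => [|? ?] /=; rewrite ?andbF //.
move=> /andP [h1 _] /andP [h2 _] [hl].
congr Node; exact: (IH _ (o + 1)).
Qed.

Lemma combF R o : ltb o R && hc o R ->
  forall i, o <= i < o + leaves R - 1 -> ~~ P i.
Proof.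
elim: R o => [|B _ C IH] o /=; first by move=> _ i; lia.
case: B => [|? ?] /=; rewrite ?andbF //; move=> /andP [hC hP] i hi.
case: (ltnP o i) => hoi.
- apply: (IH (o + 1)); first exact: hC.
  lia.
- by have -> : i = o by lia.
Qed.

Lemma last_dirs b t : nth false (dirs b t) (leaves t).-1 = (if t is Leaf then b else true).
Proof.
elim: t b => [//|l _ r IH] b /=.
rewrite nth_cat size_dirs.
have := leaves_pos l; have := leaves_pos r => hr hl.
have -> : ((leaves l + leaves r).-1 < leaves l) = false by lia.
have -> : (leaves l + leaves r).-1 - leaves l = (leaves r).-1 by lia.
by rewrite IH; case: r {IH hr}.
Qed.

Lemma no_lt A1 R1 A2 R2 o : ltb o (Node A1 R1) -> fitsAt P o (dirs false (Node A2 R2)) ->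
  leaves (Node A1 R1) = leaves (Node A2 R2) -> ~ (leaves A1 < leaves A2).
Proof.
move=> /= /andP [_ /andP [h1 h2]] /fitsAt_cat [fA _] hl hlt.
have hQ : ltb (o + leaves A1) R1 && hc (o + leaves A1) R1 by apply/andP.
have H := combF hQ (i := o + (leaves A2).-1).
have := leaves_pos A1; have := leaves_pos R2 => ? ?.
case: A2 fA hl hlt H => [|A21 A22] fA hl hlt H; first by move: hlt => /=; lia.
have hP := fA (leaves (Node A21 A22)).-1; rewrite last_dirs in hP.
have hr : o + leaves A1 <= o + (leaves (Node A21 A22)).-1 < o + leaves A1 + leaves R1 - 1.
  move: hl hlt => /=; lia.
by move: (H hr); rewrite hP.
Qed.

Lemma uniqT T1 T2 o : ltb o T1 -> ltb o T2 -> fitsAt P o (dirs false T1) ->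
  fitsAt P o (dirs false T2) -> leaves T1 = leaves T2 -> T1 = T2.
Proof.
elim: T1 T2 o => [|A1 IHA R1 _] [|A2 R2] o //=.
- have := leaves_pos A2; have := leaves_pos R2; lia.
- have := leaves_pos A1; have := leaves_pos R1; lia.
move=> h1 h2 f1 f2 hl.
have hA : leaves A1 = leaves A2.
  case: (ltngtP (leaves A1) (leaves A2)) => // hlt.
  - by case: (no_lt h1 f2 hl hlt).
  - by case: (no_lt h2 f1 (esym hl) hlt).
move: h1 h2 f1 f2 => /andP [hA1 /andP [hR1 hc1]] /andP [hA2 /andP [hR2 hc2]]
  /fitsAt_cat [fA1 _] /fitsAt_cat [fA2 _].
have eA : A1 = A2 by apply: (IHA _ o).
subst A2; congr Node; apply: (combU (o := o + leaves A1)); try by apply/andP.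
lia.
Qed.

End Fix.

Lemma des_mono n (sigma J : 'S_n) i : weak_le sigma J -> des_perm sigma i -> des_perm J i.
Proof.
move=> hw /and3P [h0 hn hd]; apply/and3P; split => //.
have x0 : 'I_n by exact: Ordinal hn.
have hs : size (enum 'I_n) = n by rewrite size_enum_ord.
move: hd; rewrite !(nth_map x0) -?enumT ?hs; try lia.
move=> hd.
have hab : inv_perm sigma (nth x0 (enum 'I_n) i.-1) (nth x0 (enum 'I_n) i).
  apply/andP; split; last exact: hd.
  rewrite !nth_enum_ord //; lia.
move: (hw _ _ hab) => /andP [_ h]; exact: h.
Qed.

Theorem mainTheorem12 (n : nat) (sigma tau : 'S_n) (s t : tree)
    (J : 'S_n) (j : tree) :
  parking sigma s -> parking tau t ->
  is_weak_join sigma tau J -> is_tamari_join n s t j ->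
  [/\ parking J j,
      parking_le (sigma, s) (J, j),
      parking_le (tau, t) (J, j) &
      forall (rho : 'S_n) (u : tree), parking rho u ->
        parking_le (sigma, s) (rho, u) -> parking_le (tau, t) (rho, u) ->
        parking_le (J, j) (rho, u)].
Proof.
move=> [ps hs] [pt ht] [w1 w2 w3] [pj j1 j2 j3].
split.
- split => // i /and3P [h0 hn hd].
  pose P := fun i => nth false (leaf_dirs s) i || nth false (leaf_dirs t) i.
  have fs : fitsAt P 0 (dirs false s) by move=> k hk; rewrite add0n /P hk.
  have ft : fitsAt P 0 (dirs false t) by move=> k hk; rewrite add0n /P hk orbT.
  have [Us [s1 s2 s3]] := reach (ltnSn _) fs.
  have [Ut [t1 t2 t3]] := reach (ltnSn _) ft.
  have eU : Us = Ut.
    apply: (uniqT s3 t3 s2 t2).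
    by rewrite -(rt_leaves s1) -(rt_leaves t1) ps pt.
  subst Ut.
  have jU : tamari_le j Us by apply: j3 => //; rewrite /pbt -(rt_leaves s1).
  have := s2 i (rt_dle jU hd); rewrite add0n /P => /orP [hh | hh].
  + apply: des_mono w1 _; apply: hs; by apply/and3P.
  + apply: des_mono w2 _; apply: ht; by apply/and3P.
- by split.
- by split.
- move=> rho u [pu _] [r1 r2] [r3 r4]; split => /=; first exact: w3.
  exact: j3.
Qed.
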